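(* If a central extension $0\to(M,\alpha_M)\to(K,\alpha_K)\xrightarrow{\pi}(L,\alpha_L)\to0$ of Hom-Leibniz $n$-algebras is a universal $\alpha$-central extension, then $(K,\alpha_K)$ is perfect and every central extension $\rho:(F,\alpha_F)\to(K,\alpha_K)$ of $(K,\alpha_K)$ splits (there is a homomorphism $\sigma:K\to F$ with $\rho\circ\sigma=\mathrm{id}_K$).
   Context: Fix a field $\mathbb K$ and $n\ge2$. A (multiplicative) Hom-Leibniz $n$-algebra is a $\mathbb K$-vector space $L$ with an $n$-linear bracket and a linear map $\alpha_L$ preserving the bracket, satisfying $[[x_1,\dots,x_n],\alpha_L(y_1),\dots,\alpha_L(y_{n-1})]=\sum_{i=1}^n[\alpha_L(x_1),\dots,[x_i,y_1,\dots,y_{n-1}],\dots,\alpha_L(x_n)]$. Homomorphisms preserve brackets and commute with twisting maps. Perfect: $K=[K,\dots,K]$. Center $Z(K)$: elements $x$ such that every bracket with $x$ in some position equals $0$. An extension of $L$ is a surjective homomorphism $\pi:K\to L$ with kernel $M$; central if $M\subseteq Z(K)$; $\alpha$-central if every bracket with $n-1$ entries in $\alpha_K(M)$ and the remaining entry (any position) in $K$ vanishes. A central extension $\pi$ is universal $\alpha$-central if for every $\alpha$-central extension $\pi':K'\to L$ there is a unique homomorphism $h:K\to K'$ with $\pi'\circ h=\pi$. *)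

(* Defs.v *)
From HB Require Import structures.
From mathcomp Require Import all_boot all_order all_algebra.
Set Implicit Arguments. Unset Strict Implicit. Unset Printing Implicit Defensive.
Import GRing.Theory.
Local Open Scope ring_scope.

Definition set_at (T : Type) (n : nat) (x : 'I_n -> T) (i : 'I_n) (v : T)
  : 'I_n -> T := fun j => if j == i then v else x j.

Definition cons_at (T : Type) (n : nat) (a : T) (y : nat -> T) : 'I_n -> T :=
  fun j => if nat_of_ord j is k.+1 then y k else a.

Record hleib (R : fieldType) (n : nat) := HLeib {
  hl_car :> lmodType R;
  hl_br : ('I_n -> hl_car) -> hl_car;
  hl_alpha : hl_car -> hl_car;
  hl_br_multilinear : forall (x : 'I_n -> hl_car) (i : 'I_n) (a : R) (u v : hl_car),
      hl_br (set_at x i (a *: u + v)) = a *: hl_br (set_at x i u) + hl_br (set_at x i v);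
  hl_alpha_linear : forall (a : R) (u v : hl_car),
      hl_alpha (a *: u + v) = a *: hl_alpha u + hl_alpha v;
  hl_alpha_br : forall x : 'I_n -> hl_car, hl_alpha (hl_br x) = hl_br (hl_alpha \o x);
  hl_identity : forall (x : 'I_n -> hl_car) (y : nat -> hl_car),
      hl_br (cons_at (hl_br x) (hl_alpha \o y))
      = \sum_(i < n) hl_br (set_at (hl_alpha \o x) i (hl_br (cons_at (x i) y)))
}.

Arguments hl_br {R n} _ _.
Arguments hl_alpha {R n} _ _.

Definition is_hom (R : fieldType) (n : nat) (A B : hleib R n) (f : A -> B) : Prop :=
  [/\ forall (a : R) (u v : A), f (a *: u + v) = a *: f u + f v,
      forall x : 'I_n -> A, f (hl_br A x) = hl_br B (f \o x) &
      forall u : A, f (hl_alpha A u) = hl_alpha B (f u)].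

Definition in_center (R : fieldType) (n : nat) (A : hleib R n) (z : A) : Prop :=
  forall (x : 'I_n -> A) (i : 'I_n), hl_br A (set_at x i z) = 0.

Definition perfect (R : fieldType) (n : nat) (A : hleib R n) : Prop :=
  forall z : A, exists s : seq (R * ('I_n -> A)),
    z = \sum_(p <- s) p.1 *: hl_br A p.2.

Definition is_extension (R : fieldType) (n : nat) (A B : hleib R n) (p : A -> B) : Prop :=
  is_hom p /\ forall b : B, exists a : A, p a = b.

Definition is_central_ext (R : fieldType) (n : nat) (A B : hleib R n) (p : A -> B) : Prop :=
  is_extension p /\ forall m : A, p m = 0 -> in_center m.

Definition is_alpha_central_ext (R : fieldType) (n : nat) (A B : hleib R n) (p : A -> B)
  : Prop :=
  is_extension p /\
  forall (x : 'I_n -> A) (i : 'I_n),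
    (forall j : 'I_n, j != i -> exists m : A, p m = 0 /\ x j = hl_alpha A m) ->
    hl_br A x = 0.

Definition is_universal_alpha_central (R : fieldType) (n : nat) (A B : hleib R n)
  (p : A -> B) : Prop :=
  is_central_ext p /\
  forall (A' : hleib R n) (p' : A' -> B), is_alpha_central_ext p' ->
    (exists h : A -> A', is_hom h /\ forall a, p' (h a) = p a) /\
    (forall h1 h2 : A -> A', is_hom h1 -> is_hom h2 ->
       (forall a, p' (h1 a) = p a) -> (forall a, p' (h2 a) = p a) ->
       forall a, h1 a = h2 a).

(* Main.v *)
Require Import Defs.
From Stdlib Require Import ClassicalEpsilon FunctionalExtensionality PropExtensionality.
From HB Require Import structures.
From mathcomp Require Import all_boot all_order all_algebra.
Set Implicit Arguments. Unset Strict Implicit. Unset Printing Implicit Defensive.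
Import GRing.Theory.
Local Open Scope ring_scope.


Lemma dbl0 (V : zmodType) (a : V) : a = a + a -> a = 0.
Proof. by move=> h; apply: (addrI a); rewrite addr0 -h. Qed.

Section Gen.
Variables (R : fieldType) (n : nat).

Lemma br_setD (A : hleib R n) (x : 'I_n -> A) i u v :
  hl_br A (set_at x i (u + v)) = hl_br A (set_at x i u) + hl_br A (set_at x i v).
Proof. by have := hl_br_multilinear x i 1 u v; rewrite !scale1r. Qed.

Lemma br_set0 (A : hleib R n) (x : 'I_n -> A) i : hl_br A (set_at x i 0) = 0.
Proof.
by apply: dbl0; have := br_setD x i 0 0; rewrite addr0.
Qed.

Lemma br_setZ (A : hleib R n) (x : 'I_n -> A) i a u :
  hl_br A (set_at x i (a *: u)) = a *: hl_br A (set_at x i u).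
Proof. by have := hl_br_multilinear x i a u 0; rewrite !addr0 br_set0 addr0. Qed.

Lemma br_setB (A : hleib R n) (x : 'I_n -> A) i u v :
  hl_br A (set_at x i (u - v)) = hl_br A (set_at x i u) - hl_br A (set_at x i v).
Proof. by rewrite br_setD -scaleN1r br_setZ scaleN1r. Qed.

Lemma br_set_sum (A : hleib R n) (x : 'I_n -> A) i (T : Type) (s : seq (R * T)) (b : T -> A) :
  hl_br A (set_at x i (\sum_(p <- s) p.1 *: b p.2)) = \sum_(p <- s) p.1 *: hl_br A (set_at x i (b p.2)).
Proof.
elim: s => [|p s IH]; first by rewrite !big_nil br_set0.
by rewrite !big_cons br_setD br_setZ IH.
Qed.

Lemma set_at_id (T : Type) (x : 'I_n -> T) i : set_at x i (x i) = x.
Proof. by apply: functional_extensionality => j; rewrite /set_at; case: eqP => // ->. Qed.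

Lemma center_br (A : hleib R n) (x : 'I_n -> A) i : in_center (x i) -> hl_br A x = 0.
Proof. by move=> H; rewrite -(set_at_id x i) H. Qed.

Lemma alpha0 (A : hleib R n) : hl_alpha A 0 = 0.
Proof.
by apply: dbl0; have := @hl_alpha_linear _ _ A 1 0 0; rewrite !scale1r !addr0.
Qed.

Lemma hom0 (A B : hleib R n) (f : A -> B) : is_hom f -> f 0 = 0.
Proof.
by case=> lf _ _; apply: dbl0; have := lf 1 0 0; rewrite !scale1r !addr0.
Qed.

Lemma homD (A B : hleib R n) (f : A -> B) : is_hom f -> forall u v, f (u + v) = f u + f v.
Proof. move=> h u v; case: (h) => lf _ _; by have := lf 1 u v; rewrite !scale1r. Qed.

Lemma homZ (A B : hleib R n) (f : A -> B) : is_hom f -> forall a u, f (a *: u) = a *: f u.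
Proof. move=> h a u; case: (h) => lf _ _; by have := lf a u 0; rewrite !addr0 (hom0 h) addr0. Qed.

Lemma homB (A B : hleib R n) (f : A -> B) : is_hom f -> forall u v, f (u - v) = f u - f v.
Proof. by move=> h u v; rewrite homD // -scaleN1r homZ // scaleN1r. Qed.

Lemma hom_sum (A B : hleib R n) (f : A -> B) (T : Type) (s : seq (R * T)) (b : T -> A) :
  is_hom f -> f (\sum_(p <- s) p.1 *: b p.2) = \sum_(p <- s) p.1 *: f (b p.2).
Proof.
move=> h; elim: s => [|p s IH]; first by rewrite !big_nil (hom0 h).
by rewrite !big_cons homD // homZ // IH.
Qed.

End Gen.


Section Part2.
Variables (R : fieldType) (n : nat) (hn : (2 <= n)%N).
Variables (K L F : hleib R n) (pi : K -> L) (rho : F -> K).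
Hypotheses (pic : is_central_ext pi) (rhoc : is_central_ext rho).

Let o0 : 'I_n := Ordinal (ltnW hn).
Let o1 : 'I_n := Ordinal hn.

Lemma exists_other (i : 'I_n) : exists j, j != i.
Proof.
case: (eqVneq i o0) => [->|h]; last by exists o0; rewrite eq_sym.
by exists o1; apply/eqP => /(congr1 val).
Qed.

Lemma cons_at0 (T : Type) (a : T) y : cons_at a y o0 = a.
Proof. by []. Qed.

Lemma key (i : 'I_n) (x mm : 'I_n -> F) (y : 'I_n -> F) :
  (forall j, j != i -> pi (rho (mm j)) = 0 /\ x j = hl_alpha F (mm j)) ->
  hl_br F (set_at x i (hl_br F y)) = 0.
Proof.
move=> Hm.
have cK := pic.2; have cF := rhoc.2.
have rh := rhoc.1.1.
case: (rh) => _ rbr _.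
pose X := set_at mm i (y o0).
pose Y : nat -> F := fun k => y (insubd o0 k.+1).
have cyY : cons_at (y o0) Y = y.
  apply: functional_extensionality => j; rewrite /cons_at /Y.
  case: j => [[|k] Hk] /=; first by congr y; apply: val_inj.
  by congr y; apply: val_inj; rewrite val_insubd Hk.
have cX : in_center (hl_br F X).
  apply: cF; rewrite rbr; have [j0 Hj0] := exists_other i.
  apply: (center_br (i := j0)); rewrite /= /X /set_at (negbTE Hj0).
  by apply: cK; case: (Hm j0 Hj0).
have := hl_identity X Y.
rewrite (center_br (i := o0)) ?cons_at0 //.
rewrite (bigD1 i) //= big1 ?addr0.
  move=> ->; congr (hl_br F); apply: functional_extensionality => j.
  rewrite /set_at; case: eqP => [_|/eqP Hj]; first by rewrite /X /set_at eqxx cyY.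
  by rewrite /= /X /set_at (negbTE Hj); case: (Hm j Hj).
move=> k Hk.
have c : in_center (hl_br F (cons_at (X k) Y)).
  apply: cF; rewrite rbr; apply: (center_br (i := o0)).
  rewrite /= /X /set_at (negbTE Hk); apply: cK; by case: (Hm k Hk).
exact: c.
Qed.

Lemma comp_ac : perfect K -> is_alpha_central_ext (fun f => pi (rho f)).
Proof.
move=> Kp.
have rh := rhoc.1.1.
split.
  split; last first.
    move=> b; case: (pic.1.2 b) => k <-; case: (rhoc.1.2 k) => f <-; by exists f.
  case: pic.1.1 => pl pb pa; case: rhoc.1.1 => rl rb ra.
  split => [a u v|x|u]; by rewrite ?rl ?pl ?rb ?pb ?ra ?pa.
move=> x i Hx.
have H' : forall j, exists m, j != i -> pi (rho m) = 0 /\ x j = hl_alpha F m.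
  move=> j; case: (eqVneq j i) => [->|h]; first by exists 0 => /eqP.
  by case: (Hx j h) => m Hm; exists m.
pose mm j := proj1_sig (constructive_indefinite_description _ (H' j)).
have Hm : forall j, j != i -> pi (rho (mm j)) = 0 /\ x j = hl_alpha F (mm j).
  by move=> j; exact: (proj2_sig (constructive_indefinite_description _ (H' j))).
have Hs := rhoc.1.2.
pose g k := proj1_sig (constructive_indefinite_description _ (Hs k)).
have gK : forall k, rho (g k) = k.
  by move=> k; exact: (proj2_sig (constructive_indefinite_description _ (Hs k))).
case: (Kp (rho (x i))) => s Hxs.
pose t := \sum_(p <- s) p.1 *: (fun q => hl_br F (g \o q)) p.2.
have rt : rho t = rho (x i).
  rewrite /t (@hom_sum _ _ F K rho _ s (fun q => hl_br F (g \o q))) // Hxs.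
  apply: eq_bigr => p _; congr (_ *: _); case: rh => _ rb _; rewrite rb.
  by congr (hl_br K); apply: functional_extensionality => j /=.
rewrite -(set_at_id x i).
have -> : hl_br F (set_at x i (x i)) = hl_br F (set_at x i (t + (x i - t))).
  by rewrite addrC subrK.
rewrite br_setD /t (br_set_sum x i s (fun q => hl_br F (g \o q))) big1 ?add0r.
  apply: rhoc.2; by rewrite homB // rt subrr.
move=> p _; by rewrite (key (mm := mm)) ?scaler0.
Qed.

Lemma hom_comp (A B C : hleib R n) (f : A -> B) (g : B -> C) :
  is_hom f -> is_hom g -> is_hom (fun a => g (f a)).
Proof.
case=> fl fb fa; case=> gl gb ga.
split => [a u v|x|u]; by rewrite ?fl ?gl ?fb ?gb ?fa ?ga.
Qed.

Lemma hom_id (A : hleib R n) : is_hom (fun a : A => a).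
Proof. by split. Qed.

Lemma pi_ac : is_alpha_central_ext pi.
Proof.
split; first exact: pic.1.
move=> x i Hx; have [j0 Hj0] := exists_other i.
case: (Hx j0 Hj0) => m [pm xm].
apply: (center_br (i := j0)); rewrite xm; apply: pic.2.
by case: pic.1.1 => _ _ ->; rewrite pm alpha0.
Qed.

Lemma split_ext : is_universal_alpha_central pi -> perfect K ->
  exists sigma : K -> F, is_hom sigma /\ forall k : K, rho (sigma k) = k.
Proof.
move=> hu Kp.
case: (hu.2 F _ (comp_ac Kp)) => [[h [hh hp]] _].
exists h; split => // k.
have := (hu.2 K pi pi_ac).2 (fun a => rho (h a)) (fun a => a).
by apply => //; first exact: hom_comp rhoc.1.1.
Qed.

End Part2.


Section Quot.
Variables (R : fieldType) (n : nat) (K : hleib R n).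

Definition WW (z : K) : Prop :=
  exists s : seq (R * ('I_n -> K)), z = \sum_(p <- s) p.1 *: hl_br K p.2.

Lemma WW0 : WW 0.
Proof. by exists [::]; rewrite big_nil. Qed.

Lemma WWD u v : WW u -> WW v -> WW (u + v).
Proof. by case=> s -> [t ->]; exists (s ++ t); rewrite big_cat. Qed.

Lemma WWZ a u : WW u -> WW (a *: u).
Proof.
case=> s ->; exists [seq (a * p.1, p.2) | p <- s].
rewrite big_map scaler_sumr; apply: eq_bigr => p _ /=; by rewrite scalerA.
Qed.

Lemma WWN u : WW u -> WW (- u).
Proof. by move=> h; rewrite -scaleN1r; apply: WWZ. Qed.

Lemma WWB u v : WW u -> WW v -> WW (u - v).
Proof. by move=> hu hv; apply: WWD => //; apply: WWN. Qed.

Lemma WWbr x : WW (hl_br K x).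
Proof. by exists [:: (1, x)]; rewrite big_seq1 scale1r. Qed.

Lemma alpha_hom : is_hom (hl_alpha K).
Proof. split; [exact: (@hl_alpha_linear _ _ K) | exact: (@hl_alpha_br _ _ K) | by []]. Qed.

Lemma WWA u : WW u -> WW (hl_alpha K u).
Proof.
case=> s ->; rewrite (hom_sum _ (fun q => hl_br K q)); last exact: alpha_hom.
exists [seq (p.1, hl_alpha K \o p.2) | p <- s]; rewrite big_map; apply: eq_bigr => p _; by rewrite hl_alpha_br.
Qed.

Definition nf (z : K) : K := epsilon (inhabits (0 : K)) (fun y => WW (y - z)).

Lemma nf_spec z : WW (nf z - z).
Proof.
apply: (epsilon_spec (inhabits (0 : K)) (fun y => WW (y - z))).
by exists z; rewrite subrr; exact: WW0.
Qed.

Lemma nf_eq a b : WW (a - b) -> nf a = nf b.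
Proof.
move=> h; rewrite /nf; congr (epsilon _); apply: functional_extensionality => y.
apply: propositional_extensionality; split => hy.
  by have := WWD hy h; rewrite addrA subrK.
have := WWB hy h; by rewrite opprB addrA subrK.
Qed.

Lemma nfK z : nf (nf z) = nf z.
Proof. exact/nf_eq/nf_spec. Qed.

Definition Q := {z : K | nf z == z}.
HB.instance Definition _ := Choice.on Q.

Definition qp (z : K) : Q := exist _ (nf z) (introT eqP (nfK z)).

Lemma qpE a b : WW (a - b) -> qp a = qp b.
Proof. by move=> h; apply: val_inj; rewrite /= (nf_eq h). Qed.

Lemma qpK (q : Q) : qp (val q) = q.
Proof. by apply: val_inj => /=; apply/eqP; case: q. Qed.

Lemma qp_spec z : WW (val (qp z) - z).
Proof. exact: nf_spec. Qed.

Definition qzero := qp 0.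
Definition qadd (q1 q2 : Q) := qp (val q1 + val q2).
Definition qopp (q : Q) := qp (- val q).
Definition qscale (a : R) (q : Q) := qp (a *: val q).

Lemma qpD x y : qadd (qp x) (qp y) = qp (x + y).
Proof.
apply: qpE; rewrite opprD addrACA; apply: WWD; exact: qp_spec.
Qed.

Lemma qpN x : qopp (qp x) = qp (- x).
Proof. apply: qpE; rewrite -opprD; apply: WWN; exact: qp_spec. Qed.

Lemma qpZ a x : qscale a (qp x) = qp (a *: x).
Proof. apply: qpE; rewrite -scalerBr; apply: WWZ; exact: qp_spec. Qed.

Lemma qaddA : associative qadd.
Proof.
move=> a b c; rewrite -(qpK a) -(qpK b) -(qpK c) !qpD; by rewrite addrA.
Qed.
Lemma qaddC : commutative qadd.
Proof. by move=> a b; rewrite -(qpK a) -(qpK b) !qpD addrC. Qed.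
Lemma qadd0 : left_id qzero qadd.
Proof. by move=> a; rewrite -(qpK a) /qzero qpD add0r. Qed.
Lemma qaddN : left_inverse qzero qopp qadd.
Proof. by move=> a; rewrite -(qpK a) qpN qpD addNr. Qed.

HB.instance Definition _ := GRing.isZmodule.Build Q qaddA qaddC qadd0 qaddN.

Lemma qaddE (x y : Q) : x + y = qadd x y. Proof. by []. Qed.
Lemma qscaleA a b v : qscale a (qscale b v) = qscale (a * b) v.
Proof. by rewrite -(qpK v) !qpZ scalerA. Qed.
Lemma qscale1 : left_id 1 qscale.
Proof. by move=> v; rewrite -(qpK v) qpZ scale1r. Qed.
Lemma qscaleDr : right_distributive qscale +%R.
Proof. move=> a u v; rewrite -(qpK u) -(qpK v) !qaddE (qpD (val u)) !qpZ (qpD (a *: val u)); by rewrite scalerDr. Qed.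
Lemma qscaleDl v : {morph qscale^~ v : a b / a + b}.
Proof. by move=> a b; rewrite -(qpK v) !qaddE !qpZ (qpD (a *: val v)) scalerDl. Qed.

HB.instance Definition _ := GRing.Zmodule_isLmodule.Build R Q qscaleA qscale1 qscaleDr qscaleDl.

End Quot.

Section QH.
Variables (R : fieldType) (n : nat) (K : hleib R n).

Definition qa (q : Q K) : Q K := qp (hl_alpha K (val q)).

Lemma qaE z : qa (qp z) = qp (hl_alpha K z).
Proof.
apply: qpE; rewrite -(homB (alpha_hom K)); apply: WWA; exact: qp_spec.
Qed.

Lemma qpD' (x y : K) : qp x + qp y = qp (x + y).
Proof. exact: qpD. Qed.
Lemma qpZ' a (x : K) : a *: qp x = qp (a *: x).
Proof. exact: qpZ. Qed.
Lemma qp0 : qp (0 : K) = 0.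
Proof. by []. Qed.

Lemma qa_lin (a : R) (u v : Q K) : qa (a *: u + v) = a *: qa u + qa v.
Proof.
rewrite -(qpK u) -(qpK v) qpZ' qpD' !qaE qpZ' qpD'.
by rewrite (@hl_alpha_linear _ _ K).
Qed.

Definition QQ : hleib R n.
refine (@HLeib R n (Q K) (fun _ => 0) qa _ qa_lin _ _).
- by move=> x i a u v; rewrite scaler0 addr0.
- by move=> x; rewrite -qp0 qaE alpha0.
- by move=> x y; rewrite big1.
Defined.

Lemma qp_hom_alpha (z : K) : qp (hl_alpha K z) = hl_alpha QQ (qp z).
Proof. by rewrite /= qaE. Qed.

Lemma qp_zero (z : K) : qp z = 0 -> WW z.
Proof.
move=> h; have := qp_spec z; rewrite h /=.
have := @qp_spec _ _ K 0; rewrite subr0 => h0 h1.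
have := WWB h0 h1; by rewrite opprB addrC subrK.
Qed.

End QH.


Section Prod.
Variables (R : fieldType) (n : nat) (A B : hleib R n).

Lemma pair_ext (u v : (A * B)%type) : u.1 = v.1 -> u.2 = v.2 -> u = v.
Proof. by case: u v => ? ? [? ?] /= -> ->. Qed.

Lemma fst_set (x : 'I_n -> (A * B)%type) i u :
  fst \o set_at x i u = set_at (fst \o x) i u.1.
Proof. by apply: functional_extensionality => j; rewrite /set_at /=; case: eqP. Qed.
Lemma snd_set (x : 'I_n -> (A * B)%type) i u :
  snd \o set_at x i u = set_at (snd \o x) i u.2.
Proof. by apply: functional_extensionality => j; rewrite /set_at /=; case: eqP. Qed.
Lemma fst_cons (a : (A * B)%type) y :
  fst \o cons_at (n := n) a y = cons_at a.1 (fst \o y).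
Proof. by apply: functional_extensionality => -[[|k] ?]. Qed.
Lemma snd_cons (a : (A * B)%type) y :
  snd \o cons_at (n := n) a y = cons_at a.2 (snd \o y).
Proof. by apply: functional_extensionality => -[[|k] ?]. Qed.

Lemma sum_fst (F : 'I_n -> (A * B)%type) : (\sum_i F i).1 = \sum_i (F i).1.
Proof. by apply: (big_morph fst). Qed.
Lemma sum_snd (F : 'I_n -> (A * B)%type) : (\sum_i F i).2 = \sum_i (F i).2.
Proof. by apply: (big_morph snd). Qed.

Definition pbr (x : 'I_n -> (A * B)%type) : (A * B)%type :=
  (hl_br A (fst \o x), hl_br B (snd \o x)).
Definition pal (u : (A * B)%type) : (A * B)%type := (hl_alpha A u.1, hl_alpha B u.2).

Definition PP : hleib R n.
refine (@HLeib R n ((A * B)%type : lmodType R) pbr pal _ _ _ _).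
- move=> x i a u v; apply: pair_ext; rewrite /pbr /= ?fst_set ?snd_set /=.
    exact: hl_br_multilinear.
  exact: hl_br_multilinear.
- move=> a u v; apply: pair_ext; rewrite /pal /=; exact: hl_alpha_linear.
- move=> x; apply: pair_ext; rewrite /pal /pbr /=; exact: hl_alpha_br.
- move=> x y; apply: pair_ext.
    rewrite sum_fst /pbr /= fst_cons /=.
    rewrite (hl_identity (fst \o x) (fst \o y)).
    by apply: eq_bigr => i _; rewrite fst_set fst_cons.
  rewrite sum_snd /pbr /= snd_cons /=.
  rewrite (hl_identity (snd \o x) (snd \o y)).
  by apply: eq_bigr => i _; rewrite snd_set snd_cons.
Defined.

End Prod.

Lemma br_zero_entry (R : fieldType) n (A : hleib R n) (x : 'I_n -> A) j :
  x j = 0 -> hl_br A x = 0.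
Proof. by move=> h; rewrite -(set_at_id x j) h br_set0. Qed.

Section Perf.
Variables (R : fieldType) (n : nat) (hn : (2 <= n)%N) (K L : hleib R n) (pi : K -> L).

Let o0 : 'I_n := Ordinal (ltnW hn).
Let o1 : 'I_n := Ordinal hn.

Lemma exists_other' (i : 'I_n) : exists j, j != i.
Proof.
case: (eqVneq i o0) => [->|h]; last by exists o0; rewrite eq_sym.
by exists o1; apply/eqP => /(congr1 val).
Qed.

Lemma perfect_of_univ : is_universal_alpha_central pi -> perfect K.
Proof.
move=> hu.
have pih := hu.1.1.1.
pose P := PP L (QQ K).
pose p' : P -> L := fst.
have ac : is_alpha_central_ext p'.
  split.
    split; first by split.
    by move=> b; exists (b, 0).
  move=> x i Hx; have [j0 Hj0] := exists_other' i.
  case: (Hx j0 Hj0) => m [pm xm].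
  apply: pair_ext => /=; last by [].
  apply: (br_zero_entry (j := j0)) => /=; rewrite xm /=.
  by move: pm; rewrite /p' /= => ->; rewrite alpha0.
have qa0 : qa (0 : Q K) = 0 by rewrite -qp0 qaE alpha0.
pose h1 : K -> P := fun k => (pi k, 0).
pose h2 : K -> P := fun k => (pi k, qp k).
have hh1 : is_hom h1.
  move: pih => [pl pb pa].
  split => [a u v|x|u]; apply: pair_ext => /=;
    by rewrite ?pl ?pb ?pa ?scaler0 ?addr0 ?qa0.
have hh2 : is_hom h2.
  move: pih => [pl pb pa].
  split => [a u v|x|u]; apply: pair_ext => /=;
    rewrite ?pl ?pb ?pa ?qpZ' ?qpD' ?qaE //.
  by rewrite -qp0; apply: qpE; rewrite subr0; exact: WWbr.
move=> z.
have := (hu.2 P p' ac).2 h1 h2 hh1 hh2 (fun _ => erefl) (fun _ => erefl) z.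
move=> /(congr1 snd) /= /esym /qp_zero.
by case=> s ->; exists s.
Qed.

End Perf.

Theorem theorem3p11 (R : fieldType) (n : nat) (hn : (2 <= n)%N)
  (K L : hleib R n) (pi : K -> L) :
  is_universal_alpha_central pi ->
  perfect K /\
  (forall (F : hleib R n) (rho : F -> K), is_central_ext rho ->
     exists sigma : K -> F, is_hom sigma /\ forall k : K, rho (sigma k) = k).
Proof.
move=> hu; have Kp := perfect_of_univ hn hu.
split => // F rho rc.
exact: (split_ext hn hu.1 rc hu Kp).
Qed.
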